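(* (Explicit Rayleigh's Shorting Law.) Let $\Gamma$ be a metrized graph and let $p,q,s,t\in\Gamma$ with $p\neq q$. Then $$r(s,t)=r_{\Gamma_{pq}}(s,t)+\frac{1}{r(p,q)}\big[j_p(q,s)-j_p(q,t)\big]^2 .$$ In particular $r(s,t)\ge r_{\Gamma_{pq}}(s,t)$, and equality holds if and only if $j_p(q,s)=j_p(q,t)$.
   Context: A metrized graph $\Gamma$ is a finite connected graph (multiple edges and self-loops allowed) in which each edge is identified with a closed line segment of positive length; any finite set of points may be declared vertices. $\Gamma$ is regarded as a resistive electric circuit in which each edge is a resistor whose resistance equals its length. For $x,y\in\Gamma$, $r(x,y)$ is the effective resistance between $x$ and $y$. For $x,y,z\in\Gamma$, $j_z(x,y)$ is the voltage at $x$ when a unit current enters the circuit at $y$ and exits at $z$, with reference voltage $0$ at $z$ (so $j_x(y,y)=r(x,y)$). For $p,q\in\Gamma$, $\Gamma_{pq}$ denotes the metrized graph obtained from $\Gamma$ by identifying the points $p$ and $q$; $r_{\Gamma_{pq}}$ and $j^{\Gamma_{pq}}$ denote the resistance and voltage functions on $\Gamma_{pq}$ (points of $\Gamma$ are regarded as points of $\Gamma_{pq}$ via the quotient map). *)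

(* Defs.v *)
(* A metrized graph is given by a model: a finite vertex
   type V and a list of edges (a, b, L) with length (= resistance) L > 0;
   multiple edges and self-loops are allowed. *)
From HB Require Import structures.
From mathcomp Require Import all_boot all_order all_algebra.
From Stdlib Require Import ClassicalEpsilon.
Set Implicit Arguments. Unset Strict Implicit. Unset Printing Implicit Defensive.
Import Order.TTheory GRing.Theory Num.Theory.
Local Open Scope ring_scope.

Section MetrizedGraph.
Variables (R : realFieldType) (V : finType).

Definition adj (E : seq (V * V * R)) : rel V :=
  fun u v => has (fun e => ((e.1.1 == u) && (e.1.2 == v)) ||
                           ((e.1.1 == v) && (e.1.2 == u))) E.

Definition metrized_graph (E : seq (V * V * R)) : Prop :=
  (forall e, List.In e E -> 0 < e.2) /\ (forall u v : V, connect (adj E) u v).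

(* net current flowing out of vertex w into the edges, for potential v;
   the current along edge (a,b,L) from a to b is (v a - v b) / L *)
Definition outflow (E : seq (V * V * R)) (v : V -> R) (w : V) : R :=
  \sum_(e <- E) (((e.1.1 == w)%:R - (e.1.2 == w)%:R) * (v e.1.1 - v e.1.2) / e.2).

(* v is the potential when a unit current enters at y and exits at z,
   with reference voltage 0 at z *)
Definition is_voltage (E : seq (V * V * R)) (z y : V) (v : V -> R) : Prop :=
  (forall w, outflow E v w = (w == y)%:R - (w == z)%:R) /\ v z = 0.

Definition voltage (E : seq (V * V * R)) (z y : V) : V -> R :=
  epsilon (inhabits (fun _ : V => 0 : R)) (is_voltage E z y).

(* j E z x y = j_z(x,y) : voltage at x, current in at y, out at z *)
Definition j (E : seq (V * V * R)) (z x y : V) : R := voltage E z y x.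

Definition r (E : seq (V * V * R)) (x y : V) : R := j E x y y.

(* Gamma_pq: identify q with p.  Vertex type of the quotient: V minus q. *)
Definition merge_pt (p q : V) (hpq : p != q) (w : V) : {x : V | x != q} :=
  insubd (exist (fun x => x != q) p hpq) w.

Definition merge_edges (p q : V) (hpq : p != q) (E : seq (V * V * R))
  : seq ({x : V | x != q} * {x : V | x != q} * R) :=
  map (fun e => (merge_pt hpq e.1.1, merge_pt hpq e.1.2, e.2)) E.

End MetrizedGraph.

(* Main.v *)
Require Import Defs.
From HB Require Import structures.
From mathcomp Require Import all_boot all_order all_algebra.
From mathcomp Require Import ring lra.
From Stdlib Require Import ClassicalEpsilon.
Set Implicit Arguments. Unset Strict Implicit. Unset Printing Implicit Defensive.
Import Order.TTheory GRing.Theory Num.Theory.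
Local Open Scope ring_scope.

Section Gen.
Variables (R : realFieldType) (V : finType) (E : seq (V * V * R)).
Hypothesis hE : metrized_graph E.

Lemma in_In (e : V * V * R) (l : seq (V * V * R)) : e \in l -> List.In e l.
Proof. elim: l => //= a l IH; rewrite inE => /orP [/eqP->|/IH]; auto. Qed.

Lemma sum_ind (u : V -> R) a : \sum_w u w * (a == w)%:R = u a.
Proof.
rewrite (bigD1 a) //= eqxx mulr1 big1 ?addr0 // => w hw.
by rewrite eq_sym (negbTE hw) mulr0.
Qed.

Lemma outflow_lin (a : R) (u v : V -> R) w :
  outflow E (fun x => a * u x + v x) w = a * outflow E u w + outflow E v w.
Proof.
rewrite /outflow mulr_sumr -big_split /=; apply: eq_bigr => e _; ring.
Qed.

Lemma outflow_sum (v : V -> R) : \sum_w outflow E v w = 0.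
Proof.
rewrite /outflow exchange_big /= big1 // => e _.
have H : forall w, ((e.1.1 == w)%:R - (e.1.2 == w)%:R) * (v e.1.1 - v e.1.2) / e.2
  = (1 * (e.1.1 == w)%:R) * ((v e.1.1 - v e.1.2) / e.2)
    - (1 * (e.1.2 == w)%:R) * ((v e.1.1 - v e.1.2) / e.2) by move=> w; ring.
under eq_bigr do rewrite H.
rewrite sumrB -!mulr_suml (sum_ind (fun _ => 1)) (sum_ind (fun _ => 1)); ring.
Qed.

Lemma green (u v : V -> R) :
  \sum_w u w * outflow E v w
  = \sum_(e <- E) (u e.1.1 - u e.1.2) * (v e.1.1 - v e.1.2) / e.2.
Proof.
rewrite /outflow; under eq_bigr do rewrite mulr_sumr.
rewrite exchange_big /=; apply: eq_bigr => e _.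
have H : forall w, u w * (((e.1.1 == w)%:R - (e.1.2 == w)%:R) * (v e.1.1 - v e.1.2) / e.2)
  = (u w * (e.1.1 == w)%:R) * ((v e.1.1 - v e.1.2) / e.2)
    - (u w * (e.1.2 == w)%:R) * ((v e.1.1 - v e.1.2) / e.2) by move=> w; ring.
under eq_bigr do rewrite H.
rewrite sumrB -!mulr_suml !sum_ind; ring.
Qed.

Lemma energy_ge0 (v : V -> R) :
  0 <= \sum_(e <- E) (v e.1.1 - v e.1.2) * (v e.1.1 - v e.1.2) / e.2.
Proof.
rewrite big_seq; apply: sumr_ge0 => e /in_In he.
have := (proj1 hE) e he => h2.
by apply: divr_ge0 => //; [rewrite -expr2 sqr_ge0 | apply: ltW].
Qed.

Lemma adj_const (v : V -> R) (h : forall x y, adj E x y -> v x = v y) x y :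
  connect (adj E) x y -> v x = v y.
Proof.
move=> /connectP [pth hp ->]; elim: pth x hp => //= a pth IH x /andP [ha hp].
by rewrite (h _ _ ha); exact: IH.
Qed.

Lemma energy0 (v : V -> R) :
  \sum_(e <- E) (v e.1.1 - v e.1.2) * (v e.1.1 - v e.1.2) / e.2 = 0 ->
  forall x y, v x = v y.
Proof.
rewrite big_seq_cond => /eqP; rewrite psumr_eq0; last first.
  move=> e /andP [/in_In he _]; have := (proj1 hE) e he => h2.
  by apply: divr_ge0 => //; [rewrite -expr2 sqr_ge0 | apply: ltW].
move=> /allP hall.
have hedge : forall e, e \in E -> v e.1.1 = v e.1.2.
  move=> e he; have := hall e he; rewrite he /= => /eqP.
  have h2 := (proj1 hE) e (in_In he).
  move/eqP; rewrite mulf_eq0 invr_eq0 (gt_eqF h2) orbF mulf_eq0 orbb subr_eq0.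
  by move/eqP.
move=> x y; apply: adj_const; last exact: (proj2 hE).
move=> a b /hasP [e he /orP [/andP [/eqP <- /eqP <-]|/andP [/eqP <- /eqP <-]]].
  exact: hedge.
by rewrite (hedge e he).
Qed.

Lemma ker_const (v : V -> R) : (forall w, outflow E v w = 0) -> forall x y, v x = v y.
Proof.
move=> h; apply: energy0; rewrite -green big1 // => w _; by rewrite h mulr0.
Qed.


Lemma sum_ind2 (c : R) (a : V) : \sum_w (w == a)%:R * c = c.
Proof. rewrite -[RHS](sum_ind (fun _ => c) a); apply: eq_bigr => w _; by rewrite eq_sym mulrC. Qed.

Lemma outflow_ext (v1 v2 : V -> R) w : v1 =1 v2 -> outflow E v1 w = outflow E v2 w.
Proof. by move=> h; rewrite /outflow; apply: eq_bigr => e _; rewrite !h. Qed.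

Definition Tf (z : V) (u : {ffun V -> R^o}) : {ffun V -> R^o} :=
  [ffun w => outflow E (fun x => u x) w + (w == z)%:R * u z].

Lemma Tf_linear z : linear (Tf z).
Proof.
move=> a u v; apply/ffunP => w; rewrite !ffunE /=.
rewrite (@outflow_ext (fun x => (a *: u + v) x) (fun x => a * u x + v x)); last first.
  by move=> x; rewrite !ffunE.
rewrite outflow_lin; rewrite /GRing.scale /=; ring.
Qed.

HB.instance Definition _ z := GRing.isLinear.Build R {ffun V -> R^o} {ffun V -> R^o} *:%R (Tf z) (Tf_linear z).

Lemma voltage_exists z y : exists v, is_voltage E z y v.
Proof.
pose f := linfun (Tf z).
have inj : lker f == 0%VS.
  apply/lker0P => u1 u2; rewrite !lfunE => h.
  apply/eqP; rewrite -subr_eq0; apply/eqP.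
  set u := u1 - u2.
  have hu : Tf z u = 0 by rewrite linearB /= h subrr.
  have hu' : forall w, outflow E (fun x => u x) w + (w == z)%:R * u z = 0.
    move=> w; move/ffunP: hu => /(_ w); rewrite [in LHS]ffunE => ->; by rewrite ffunE.
  have hz : u z = 0.
    have := outflow_sum (fun x => u x).
    have -> : \sum_w outflow E (fun x => u x) w = \sum_w (- ((w == z)%:R * u z)).
      apply: eq_bigr => w _; have := hu' w.
      by move/eqP; rewrite addr_eq0 => /eqP.
    rewrite sumrN sum_ind2 => /eqP; rewrite oppr_eq0 => /eqP //.
  have hk : forall w, outflow E (fun x => u x) w = 0.
    move=> w; have := hu' w; rewrite hz mulr0 addr0 //.
  apply/ffunP => x; rewrite [RHS]ffunE -hz; exact: (ker_const hk).
have surj : limg f = fullv.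
  apply/eqP; rewrite eqEdim subvf /=.
  have := limg_ker_dim f fullv; rewrite (eqP inj) capv0 dimv0 add0n => ->.
  by [].
pose b : {ffun V -> R^o} := [ffun w => (w == y)%:R - (w == z)%:R].
have : b \in limg f by rewrite surj memvf.
case/memv_imgP => u _; rewrite lfunE => hb.
have hz : u z = 0.
  have := outflow_sum (fun x => u x).
  have -> : \sum_w outflow E (fun x => u x) w = \sum_w (b w - (w == z)%:R * u z).
    apply: eq_bigr => w _; rewrite hb !ffunE; ring.
  rewrite sumrB sum_ind2.
  have -> : \sum_w b w = 0.
    under eq_bigr do rewrite ffunE.
    rewrite sumrB.
    have e1 : forall a, \sum_(w : V) (w == a)%:R = 1 :> R.
      by move=> a; rewrite -[RHS](sum_ind2 1 a); apply: eq_bigr => w _; rewrite mulr1.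
    by rewrite !e1 subrr.
  by rewrite sub0r => /eqP; rewrite oppr_eq0 => /eqP.
exists (fun x => u x); split => // w.
have := congr1 (fun g : {ffun V -> R^o} => g w) hb; rewrite !ffunE hz mulr0 addr0 => <- //.
Qed.

Lemma voltageP z y : is_voltage E z y (voltage E z y).
Proof. rewrite /voltage; apply: epsilon_spec; exact: voltage_exists. Qed.


Lemma sum_dip (u : V -> R) a b :
  \sum_w u w * ((w == a)%:R - (w == b)%:R) = u a - u b.
Proof.
under eq_bigr do rewrite mulrBr.
rewrite sumrB -(sum_ind u a) -(sum_ind u b).
by congr (_ - _); apply: eq_bigr => w _; rewrite eq_sym.
Qed.

Lemma outflow_comb (a b c : R) (u v y : V -> R) w :
  outflow E (fun x => a * u x + b * v x + c * y x) w
  = a * outflow E u w + b * outflow E v w + c * outflow E y w.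
Proof.
rewrite /outflow !mulr_sumr -!big_split /=; apply: eq_bigr => e _; ring.
Qed.

Lemma outflow_const (v : V -> R) w : (forall x y, v x = v y) -> outflow E v w = 0.
Proof.
by move=> h; rewrite /outflow big1 // => e _; rewrite (h e.1.1 e.1.2) subrr mulr0 mul0r.
Qed.

Lemma recip (u v : V -> R) a b c d :
  (forall w, outflow E u w = (w == a)%:R - (w == b)%:R) ->
  (forall w, outflow E v w = (w == c)%:R - (w == d)%:R) ->
  v a - v b = u c - u d.
Proof.
move=> hu hv.
have e1 : v a - v b = \sum_w v w * outflow E u w.
  by rewrite -sum_dip; apply: eq_bigr => w _; rewrite hu.
have e2 : u c - u d = \sum_w u w * outflow E v w.
  by rewrite -sum_dip; apply: eq_bigr => w _; rewrite hv.
rewrite e1 e2 !green; apply: eq_bigr => e _; ring.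
Qed.

Lemma r_pos p q : p != q -> 0 < r E p q.
Proof.
move=> hpq; rewrite /r /j.
set g := voltage E p q; have [hg hg0] := voltageP p q; rewrite -/g in hg hg0.
have e1 : g q - g p = \sum_w g w * outflow E g w.
  by rewrite -sum_dip; apply: eq_bigr => w _; rewrite hg.
rewrite green hg0 subr0 in e1.
rewrite lt_neqAle e1 energy_ge0 andbT eq_sym; apply/negP => /eqP h0.
have hc := energy0 h0.
have hqp : (q == p) = false by apply/negbTE; rewrite eq_sym.
have := hg q; rewrite (outflow_const q hc) eqxx hqp subr0.
by move/eqP; rewrite eq_sym oner_eq0.
Qed.

End Gen.

Section Merge.
Variables (R : realFieldType) (V : finType) (E : seq (V * V * R)).
Hypothesis hE : metrized_graph E.
Variables (p q : V) (hpq : p != q).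

Local Notation mg := (merge_pt hpq).
Local Notation E' := (merge_edges hpq E).

Lemma val_merge a : val (mg a) = if a == q then p else a.
Proof. by rewrite /merge_pt val_insubd; case: (a == q). Qed.

Lemma merge_val (x : {x : V | x != q}) : mg (val x) = x.
Proof. by apply: val_inj; rewrite val_merge (negbTE (valP x)). Qed.

Lemma merge_qp : mg q = mg p.
Proof. by apply: val_inj; rewrite !val_merge eqxx (negbTE hpq). Qed.

Lemma merge_ind a (w : {x : V | x != q}) :
  (mg a == w)%:R = (a == val w)%:R + (val w == p)%:R * (a == q)%:R :> R.
Proof.
rewrite -val_eqE val_merge; case: (eqVneq a q) => [->|hne].
  have -> : (q == val w) = false by apply/negbTE; rewrite eq_sym (valP w).
  by rewrite mulr1 add0r eq_sym.
by rewrite mulr0 addr0.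
Qed.

Lemma merged_graph : metrized_graph E'.
Proof.
split.
  move=> e' /List.in_map_iff [e [<- he]] /=; exact: (proj1 hE) e he.
have hadj : forall a b, adj E a b -> adj E' (mg a) (mg b).
  move=> a b /hasP [e he hc]; apply/hasP.
  exists (mg e.1.1, mg e.1.2, e.2); first by apply: (map_f (fun e => (mg e.1.1, mg e.1.2, e.2))).
  by case/orP: hc => /andP [/eqP -> /eqP ->] /=; rewrite !eqxx ?orbT.
have hc : forall a b, connect (adj E) a b -> connect (adj E') (mg a) (mg b).
  move=> a b /connectP [pth hp ->]; elim: pth a hp => //= c pth IH a /andP [ha hp].
  apply: connect_trans (IH _ hp); exact: connect1 (hadj _ _ ha).
move=> u v; rewrite -(merge_val u) -(merge_val v); exact: hc (proj2 hE _ _).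
Qed.

Lemma outflow_merge (h' : {x : V | x != q} -> R) w :
  outflow E' h' w
  = outflow E (fun x => h' (mg x)) (val w) + (val w == p)%:R * outflow E (fun x => h' (mg x)) q.
Proof.
rewrite /outflow /merge_edges big_map mulr_sumr -big_split /=.
apply: eq_bigr => e _; rewrite !merge_ind; ring.
Qed.

End Merge.

Theorem theorem2p3 (R : realFieldType) (V : finType) (E : seq (V * V * R))
  (hE : metrized_graph E) (p q s t : V) (hpq : p != q) :
  r E s t = r (merge_edges hpq E) (merge_pt hpq s) (merge_pt hpq t)
            + (j E p q s - j E p q t) ^+ 2 / r E p q
  /\ r (merge_edges hpq E) (merge_pt hpq s) (merge_pt hpq t) <= r E s t
  /\ (r E s t = r (merge_edges hpq E) (merge_pt hpq s) (merge_pt hpq t)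
      <-> j E p q s = j E p q t).
Proof.
set E' := merge_edges hpq E.
have hE' : metrized_graph E' := merged_graph hE hpq.
set f := voltage E s t; have [hf hf0] := voltageP hE s t; rewrite -/f in hf hf0.
set g := voltage E p q; have [hg hg0] := voltageP hE p q; rewrite -/g in hg hg0.
set h' := voltage E' (merge_pt hpq s) (merge_pt hpq t).
have [hh hh0] := voltageP hE' (merge_pt hpq s) (merge_pt hpq t); rewrite -/h' in hh hh0.
pose h := fun x => h' (merge_pt hpq x).
have jE : forall x, j E p q x = g x.
  move=> x; rewrite /j; have [ha ha0] := voltageP hE p x.
  have := recip ha hg; rewrite ha0 hg0 !subr0 => <- //.
rewrite !jE.
have rst : r E s t = f t by [].
have rpq : r E p q = g q by [].
have rm : r E' (merge_pt hpq s) (merge_pt hpq t) = h t by [].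
rewrite rst rpq rm.
have gpos : 0 < g q by rewrite -rpq; exact: r_pos.
pose d := outflow E h q - (q == t)%:R + (q == s)%:R.
have hqp : (q == p) = false by apply/negbTE; rewrite eq_sym.
have claim : forall w, outflow E h w
    = ((w == t)%:R - (w == s)%:R) + d * ((w == q)%:R - (w == p)%:R).
  move=> w; case: (eqVneq w q) => [->|hwq].
    rewrite hqp /d /=; ring.
  have := outflow_merge E hpq h' (merge_pt hpq w).
  rewrite hh (eq_sym _ (merge_pt hpq t)) (eq_sym _ (merge_pt hpq s)) !merge_ind !val_merge (negbTE hwq) -/h => e.
  rewrite ?(negbTE hwq) /d /=.
  have -> : outflow E h w = ((t == w)%:R + (w == p)%:R * (t == q)%:R -
     ((s == w)%:R + (w == p)%:R * (s == q)%:R)) - (w == p)%:R * outflow E h q.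
    by rewrite e; ring.
  rewrite (eq_sym t) (eq_sym s) (eq_sym q t) (eq_sym q s); ring.
pose k := fun x => 1 * h x + (-1) * f x + (- d) * g x.
have hk : forall w, outflow E k w = 0.
  move=> w; rewrite /k outflow_comb claim hf hg; ring.
have kc := ker_const hE hk.
have hs : h s = 0 by rewrite /h hh0.
have hpq' : h p = h q by rewrite /h (merge_qp hpq).
have e1 : d * g q = f p - f q.
  have := kc p q; rewrite /k hpq' hg0; move/eqP; rewrite -subr_eq0; move/eqP => H.
  by apply/eqP; rewrite -subr_eq0; apply/eqP; rewrite -H; ring.
have rec : f q - f p = g t - g s := recip hg hf.
have hd : d = (g s - g t) / g q.
  apply: (@mulIf _ (g q)); first by rewrite gt_eqF.
  by rewrite e1 mulfVK ?gt_eqF //; rewrite -[LHS]opprB rec opprB.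
have ht : h t = - d * g s + f t + d * g t.
  have := kc t s; rewrite /k hs hf0; move=> H; rewrite -[h t]mul1r.
  by apply/eqP; rewrite -subr_eq0; apply/eqP; move: H; set X := h t; move=> H; rewrite -[X](mul1r); lra.
have main : f t = h t + (g s - g t) ^+ 2 / g q.
  rewrite ht hd; field; rewrite gt_eqF //.
have X0 : 0 <= (g s - g t) ^+ 2 / g q by rewrite divr_ge0 ?sqr_ge0 // ltW.
split => //; split; first by rewrite main lerDl.
split.
  move=> H; have := main; rewrite -H => /eqP; rewrite -{1}[f t]addr0 => /eqP /addrI X00.
  move/eqP: X00; rewrite eq_sym mulf_eq0 invr_eq0 (gt_eqF gpos) orbF sqrf_eq0 subr_eq0.
  by move/eqP.
by move=> Hst; rewrite main Hst subrr expr0n /= mul0r addr0.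
Qed.
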